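(* Consider an MG-SPA as described in the context with $0\le\gamma<1$, and suppose that: (i) $|r^i(s,a,b)|\le M^i<M<\infty$ for all $i,a,b,s$; (ii) $S$, all $A^i$ and all $B^{\tilde i}$ are finite; (iii) transition probabilities and rewards are stationary; (iv) for every fixed $s\in S$, $f(s,\cdot)$ is a bijection; (v) all agents share one common reward function. Then the minimax operator $L$ is a contraction mapping on $\mathbb V$ (with modulus $\gamma$), i.e. $\|Lv-Lu\|\le\gamma\|v-u\|$ for all $u,v\in\mathbb V$.
   Context: An MG-SPA consists of: agents $\mathcal N=\{1,\dots,N\}$ and adversaries $\mathcal M=\{\tilde 1,\dots,\tilde N\}$ (adversary $\tilde i$ paired with agent $i$); state space $S$; agent action sets $A^i$, joint $A=\prod_iA^i$; adversary action sets $B^{\tilde i}$, joint $B=\prod B^{\tilde i}$; rewards $r^i:S\times A\times B\to\mathbb R$; transition kernel $p:S\times A\times B\to\Delta(S)$; a perturbation function $f$ with $f(s,b^{\tilde i})\in\mathcal B(\epsilon,s)\subset S$; discount $\gamma$. Given true state $s$, adversary $\tilde i$ draws $b^{\tilde i}\sim\rho^{\tilde i}(\cdot\mid s)$, agent $i$ observes $\tilde s^i=f(s,b^{\tilde i})$ and draws $a^i\sim\pi^i(\cdot\mid\tilde s^i)$, next state $\sim p(\cdot\mid s,a,b)$; agent $i$ gets $r^i$, adversary $\tilde i$ gets $-r^i$. Value functions $v^{\pi,\rho,i}(s)=\mathbb E[\sum_{t\ge1}\gamma^{t-1}r^i_t\mid s_1=s]$. A robust equilibrium $(\pi_*,\rho_*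 )$ is a joint policy with $v^{(\pi_*^{-i},\pi_*^i,\rho_*^{-\tilde i},\rho^{\tilde i}),i}(s)\ge v^{(\pi_*,\rho_* ),i}(s)\ge v^{(\pi_*^{-i},\pi^i,\rho_*^{-\tilde i},\rho_*^{\tilde i}),i}(s)$ for all $i,s,\pi^i,\rho^{\tilde i}$. $V$ is the set of bounded real functions on $S$ with sup norm; $\mathbb V=V^N$ with $\|v\|=\sup_j\|v^j\|$. For a joint policy $d$, $r_d^i$ is the expected one-step reward vector of agent $i$ and $P_d$ the induced transition matrix. Minimax operator: $L^iv^i(s)=\max_{\pi^i}\min_{\rho^{\tilde i}}[r^i_d+\gamma P_dv^i](s)$ with $d=(\pi_*^{-i},\pi^i,\rho_*^{-\tilde i},\rho^{\tilde i})$ ($\pi_*^{-i},\rho_*^{-\tilde i}$ the other players' robust-equilibrium policies), and $Lv=(L^1v^1,\dots,L^Nv^N)$. *)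

(* Defs.v *)
From HB Require Import structures.
From mathcomp Require Import all_boot all_order all_algebra.
From mathcomp Require Import all_classical all_reals all_analysis.
Set Implicit Arguments. Unset Strict Implicit. Unset Printing Implicit Defensive.
Import Order.TTheory GRing.Theory Num.Theory.
Local Open Scope ring_scope.
Local Open Scope classical_set_scope.

Section MGSPA.
Variables (R : realType) (N : nat) (S : finType) (A B : 'I_N -> finType).

Definition JA := {dffun forall i : 'I_N, A i}.
Definition JB := {dffun forall i : 'I_N, B i}.

Definition is_dist (T : finType) (q : T -> R) :=
  (forall x, 0 <= q x) /\ \sum_(x : T) q x = 1.

(* a (stationary, Markov) policy: state (observed state for agents) -> distribution *)
Definition is_policy (T : finType) (pol : S -> T -> R) := forall s, is_dist (pol s).

(* joint policies: pi i (observed state) (action of agent i),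
   rho i (true state) (action of adversary i) *)
Definition agent_pols := forall i : 'I_N, S -> A i -> R.
Definition adv_pols := forall i : 'I_N, S -> B i -> R.

Definition with_pol (pis : agent_pols) (i : 'I_N) (pol : S -> A i -> R) : agent_pols :=
  @dfwith _ (fun j : 'I_N => S -> A j -> R) pis i pol.
Definition with_adv (rhos : adv_pols) (i : 'I_N) (rh : S -> B i -> R) : adv_pols :=
  @dfwith _ (fun j : 'I_N => S -> B j -> R) rhos i rh.

(* perturbation function: adversary i's action b perturbs the true state s
   into the state f i s b observed by agent i *)
Variable f : forall i : 'I_N, S -> B i -> S.

Definition joint_weight (pi : agent_pols) (rho : adv_pols) (s : S) (a : JA) (b : JB) : R :=
  (\prod_(i < N) rho i s (b i)) * (\prod_(i < N) pi i (f s (b i)) (a i)).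

Definition rd (ri : S -> JA -> JB -> R) (pi : agent_pols) (rho : adv_pols) (s : S) : R :=
  \sum_(b : JB) \sum_(a : JA) joint_weight pi rho s a b * ri s a b.

Definition Pd (p : S -> JA -> JB -> S -> R) (pi : agent_pols) (rho : adv_pols) (s s' : S) : R :=
  \sum_(b : JB) \sum_(a : JA) joint_weight pi rho s a b * p s a b s'.

Definition Pdv p pi rho (w : S -> R) : S -> R :=
  fun s => \sum_(s' : S) Pd p pi rho s s' * w s'.

(* value function v^{pi,rho,i}(s) = E[ sum_{t>=1} gamma^{t-1} r^i_t | s_1 = s ]
   = sum_{t>=0} gamma^t (P_d^t r_d^i)(s) *)
Definition value (gamma : R) (ri : S -> JA -> JB -> R) p pi rho : S -> R :=
  fun s => limn (fun n : nat =>
    \sum_(t < n) gamma ^+ t * iter t (Pdv p pi rho) (rd ri pi rho) s).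

Definition robust_equilibrium (gamma : R) (r : 'I_N -> S -> JA -> JB -> R) p
    (pis : agent_pols) (rhos : adv_pols) :=
  (forall i, is_policy (pis i)) /\ (forall i, is_policy (rhos i)) /\
  forall (i : 'I_N) (s : S) (pol : S -> A i -> R) (rh : S -> B i -> R),
    is_policy pol -> is_policy rh ->
    value gamma (r i) p pis (with_adv rhos rh) s >= value gamma (r i) p pis rhos s /\
    value gamma (r i) p pis rhos s >= value gamma (r i) p (with_pol pis pol) rhos s.

Definition Qval (gamma : R) (r : 'I_N -> S -> JA -> JB -> R) p
    (pis : agent_pols) (rhos : adv_pols) (i : 'I_N)
    (pol : S -> A i -> R) (rh : S -> B i -> R) (w : S -> R) (s : S) : R :=
  rd (r i) (with_pol pis pol) (with_adv rhos rh) s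
  + gamma * Pdv p (with_pol pis pol) (with_adv rhos rh) w s.

Definition Lop_i gamma r p pis rhos (i : 'I_N) (w : S -> R) (s : S) : R :=
  sup [set x : R | exists pol : S -> A i -> R, is_policy pol /\
        x = inf [set y : R | exists rh : S -> B i -> R, is_policy rh /\
                   y = Qval gamma r p pis rhos pol rh w s]].

Definition Lop gamma r p pis rhos (v : 'I_N -> S -> R) : 'I_N -> S -> R :=
  fun i => Lop_i gamma r p pis rhos i (v i).

(* sup norm on VV = V^N (S finite, so every function is bounded) *)
Definition normV (v : 'I_N -> S -> R) : R :=
  \big[Num.max/0]_(j < N) \big[Num.max/0]_(s : S) `|v j s|.

End MGSPA.

(* Main.v *)
Require Import Defs.
From HB Require Import structures.
From mathcomp Require Import all_boot all_order all_algebra.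
From mathcomp Require Import all_classical all_reals all_analysis.
Import Order.TTheory GRing.Theory Num.Theory.
Local Open Scope ring_scope.
From mathcomp Require Import lra.

Lemma sum_prod_dffun (R : comRingType) (I : finType) (T : I -> finType)
  (q : forall i, T i -> R) :
  \sum_(g : {dffun forall i, T i}) \prod_i q i (g i) = \prod_i \sum_(t : T i) q i t.
Proof.
pose F i (j : {i : I & T i}) := untag 0 (q i) j.
have step1 i : \sum_(t : T i) q i t = \sum_(j | j \in tagged_with T i) F i j.
  rewrite [RHS]big_sub [RHS](reindex (tag_with i)); last first.
    by exists (untag_with i) => x _; [rewrite tag_withK | rewrite untag_withK].
  by apply: eq_bigr => t _; rewrite /F (@untagE _ _ _ 0 i (q i) (Tagged T _) (erefl i)).
under eq_bigr do rewrite step1.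
rewrite bigA_distr_big_dep.
rewrite [RHS]big_sub [RHS](reindex (@to_family_tagged_with I T)); last first.
  by exists of_family_tagged_with => x _;
    [rewrite to_family_tagged_withK | rewrite of_family_tagged_withK].
rewrite [RHS](reindex (@fprod_of_dffun I T)); last first.
  by exists (@dffun_of_fprod I T) => x _;
    [rewrite fprod_of_dffunK | rewrite dffun_of_fprodK].
apply: eq_bigr => g _; apply: eq_bigr => i _ /=.
by rewrite ffunE /F (@untagE _ _ _ 0 i (q i) (Tagged T _) (erefl i)).
Qed.

Lemma conv_bound (R : realType) (T : finType) (q X : T -> R) C :
  (forall x, 0 <= q x) -> \sum_x q x = 1 -> (forall x, `|X x| <= C) ->
  `|\sum_x q x * X x| <= C.
Proof.
move=> q0 q1 XC.
apply: le_trans (ler_norm_sum _ _ _) _.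
apply: (@le_trans _ _ (\sum_x q x * C)).
  apply: ler_sum => x _; rewrite normrM ger0_norm //; exact: ler_wpM2l.
by rewrite -big_distrl /= q1 mul1r.
Qed.

Lemma policy_with_pol (R : realType) N (S : finType) (A : 'I_N -> finType)
  (pis : agent_pols R S A) i (pol : S -> A i -> R) :
  (forall j, is_policy (pis j)) -> is_policy pol -> forall j, is_policy (@with_pol _ _ _ _ pis i pol j).
Proof. by move=> h hp j; rewrite /with_pol; case: dfwithP => // k _; exact: h. Qed.

Lemma policy_with_adv (R : realType) N (S : finType) (B : 'I_N -> finType)
  (rhos : adv_pols R S B) i (rh : S -> B i -> R) :
  (forall j, is_policy (rhos j)) -> is_policy rh -> forall j, is_policy (@with_adv _ _ _ _ rhos i rh j).
Proof. by move=> h hp j; rewrite /with_adv; case: dfwithP => // k _; exact: h. Qed.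

Lemma weight_sum (R : realType) N (S : finType) (A B : 'I_N -> finType)
  (f : forall i : 'I_N, S -> B i -> S)
  (pi : agent_pols R S A) (rho : adv_pols R S B) s :
  (forall j, is_policy (pi j)) -> (forall j, is_policy (rho j)) ->
  \sum_(b : JB B) \sum_(a : JA A) joint_weight f pi rho s a b = 1.
Proof.
move=> hpi hrho.
transitivity (\sum_(b : JB B) \prod_i rho i s (b i)).
  apply: eq_bigr => b _; rewrite /joint_weight -big_distrr /=.
  rewrite /JA (@sum_prod_dffun _ _ _ (fun i (t : A i) => pi i (f i s (b i)) t)).
  by rewrite [X in _ * X]big1 ?mulr1 // => i _; case: (hpi i (f i s (b i))).
rewrite /JB (@sum_prod_dffun _ _ _ (fun i (t : B i) => rho i s t)).
by rewrite big1 // => i _; case: (hrho i s).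
Qed.

Lemma weight_ge0 (R : realType) N (S : finType) (A B : 'I_N -> finType)
  (f : forall i : 'I_N, S -> B i -> S)
  (pi : agent_pols R S A) (rho : adv_pols R S B) s a b :
  (forall j, is_policy (pi j)) -> (forall j, is_policy (rho j)) ->
  0 <= joint_weight f pi rho s a b.
Proof.
move=> hpi hrho; apply: mulr_ge0; apply: prodr_ge0 => i _.
  by case: (hrho i s).
by case: (hpi i (f i s (b i))).
Qed.

Lemma wsum_bound (R : realType) N (S : finType) (A B : 'I_N -> finType)
  (f : forall i : 'I_N, S -> B i -> S)
  (pi : agent_pols R S A) (rho : adv_pols R S B) s (X : JB B -> JA A -> R) C :
  (forall j, is_policy (pi j)) -> (forall j, is_policy (rho j)) ->
  (forall b a, `|X b a| <= C) ->
  `|\sum_(b : JB B) \sum_(a : JA A) joint_weight f pi rho s a b * X b a| <= C.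
Proof.
move=> hpi hrho hX; rewrite pair_bigA /=.
have H := @conv_bound R _ (fun p => joint_weight f pi rho s p.2 p.1) (fun p => X p.1 p.2) C.
have H1 : forall x, 0 <= joint_weight f pi rho s x.2 x.1 by move=> x; apply: weight_ge0.
have H2 : \sum_x joint_weight f pi rho s x.2 x.1 = 1.
  by rewrite -(pair_bigA _ (fun b a => joint_weight f pi rho s a b)) weight_sum.
have H3 : forall x, `|X x.1 x.2| <= C by move=> x; apply: hX.
exact: (H H1 H2 H3).
Qed.

Lemma Pdv_eq (R : realType) N (S : finType) (A B : 'I_N -> finType)
  (f : forall i : 'I_N, S -> B i -> S) (p : S -> JA A -> JB B -> S -> R)
  (pi : agent_pols R S A) (rho : adv_pols R S B) (w : S -> R) s :
  Pdv f p pi rho w s =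
  \sum_(b : JB B) \sum_(a : JA A) joint_weight f pi rho s a b *
     (\sum_(s' : S) p s a b s' * w s').
Proof.
rewrite /Pdv /Pd.
transitivity (\sum_(s' : S) \sum_(b : JB B) \sum_(a : JA A)
                joint_weight f pi rho s a b * p s a b s' * w s').
  apply: eq_bigr => s' _; rewrite big_distrl; apply: eq_bigr => b _.
  by rewrite big_distrl.
rewrite exchange_big; apply: eq_bigr => b _; rewrite exchange_big.
apply: eq_bigr => a _; rewrite big_distrr; apply: eq_bigr => s' _.
by rewrite /= mulrA.
Qed.

Lemma Pdv_bound (R : realType) N (S : finType) (A B : 'I_N -> finType)
  (f : forall i : 'I_N, S -> B i -> S) (p : S -> JA A -> JB B -> S -> R)
  (pi : agent_pols R S A) (rho : adv_pols R S B) (w : S -> R) s C :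
  (forall j, is_policy (pi j)) -> (forall j, is_policy (rho j)) ->
  (forall s a b s', 0 <= p s a b s') ->
  (forall s a b, \sum_(s' : S) p s a b s' = 1) ->
  (forall s', `|w s'| <= C) ->
  `|Pdv f p pi rho w s| <= C.
Proof.
move=> hpi hrho p0 p1 hw; rewrite Pdv_eq; apply: wsum_bound => // b a.
exact: conv_bound.
Qed.

Lemma Pdv_sub (R : realType) N (S : finType) (A B : 'I_N -> finType)
  (f : forall i : 'I_N, S -> B i -> S) (p : S -> JA A -> JB B -> S -> R)
  (pi : agent_pols R S A) (rho : adv_pols R S B) (w1 w2 : S -> R) s :
  Pdv f p pi rho w1 s - Pdv f p pi rho w2 s = Pdv f p pi rho (fun s' => w1 s' - w2 s') s.
Proof.
by rewrite /Pdv -sumrB; apply: eq_bigr => s' _; rewrite mulrBr.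
Qed.

Lemma sup_inf_le (R : realType) (X Y : Type) (PX : X -> Prop) (PY : Y -> Prop)
  (F G : X -> Y -> R) K c :
  (exists x, PX x) -> (exists y, PY y) ->
  (forall x y, PX x -> PY y -> `|F x y| <= K) ->
  (forall x y, PX x -> PY y -> `|G x y| <= K) ->
  (forall x y, PX x -> PY y -> F x y <= G x y + c) ->
  sup [set z | exists x, PX x /\ z = inf [set w | exists y, PY y /\ w = F x y]]
  <= sup [set z | exists x, PX x /\ z = inf [set w | exists y, PY y /\ w = G x y]] + c.
Proof.
move=> [x0 hx0] [y0 hy0] hF hG hFG.
have infle (H : X -> Y -> R) : (forall x y, PX x -> PY y -> `|H x y| <= K) ->
    forall x y, PX x -> PY y -> inf [set w | exists y, PY y /\ w = H x y] <= H x y.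
  move=> hH x y hx hy; apply: ge_inf; last by exists y.
  exists (- K) => w [y' [hy' ->]].
  by have := hH x y' hx hy'; rewrite ler_norml => /andP[].
have hsG : has_sup [set z | exists x, PX x /\ z = inf [set w | exists y, PY y /\ w = G x y]].
  split; first by eexists; exists x0; split.
  exists K => z [x [hx ->]].
  apply: le_trans (infle G hG x y0 hx hy0) _.
  by have := hG x y0 hx hy0; rewrite ler_norml => /andP[].
apply: ge_sup; first by eexists; exists x0; split.
move=> z [x [hx ->]].
apply: (@le_trans _ _ (inf [set w | exists y, PY y /\ w = G x y] + c)).
  rewrite -lerBlDr; apply: lb_le_inf; first by eexists; exists y0; split.
  move=> w [y [hy ->]]; rewrite lerBlDr.
  exact: le_trans (infle F hF x y hx hy) (hFG x y hx hy).
by rewrite lerD2r; apply: sup_upper_bound => //; exists x.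
Qed.

Lemma bigmax0_ge0 (R : realType) (T : finType) (F : T -> R) :
  0 <= \big[Num.max/0]_(x : T) F x.
Proof. by elim/big_rec: _ => // x y _ hy; rewrite le_max hy orbT. Qed.

Theorem proposition1 (R : realType) (N : nat) (S : finType) (A B : 'I_N -> finType)
  (r : 'I_N -> S -> JA A -> JB B -> R)
  (p : S -> JA A -> JB B -> S -> R)
  (f : forall i : 'I_N, S -> B i -> S)
  (dist : S -> S -> R) (eps : R)
  (gamma M : R) (Mi : 'I_N -> R)
  (pis : agent_pols R S A) (rhos : adv_pols R S B) :
  0 <= gamma -> gamma < 1 ->
  (* p is a transition kernel *)
  (forall s a b s', 0 <= p s a b s') ->
  (forall s a b, \sum_(s' : S) p s a b s' = 1) ->
  (* f(s, b) lies in the eps-ball B(eps, s) *)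
  (forall i s b, dist s (f i s b) <= eps) ->
  (* (i) bounded rewards *)
  (forall i, Mi i < M) ->
  (forall i s a b, `|r i s a b| <= Mi i) ->
  (* (iv) f(s, .) is a bijection from B^i onto B(eps, s) *)
  (forall i s, injective (f i s)) ->
  (forall i s s', dist s s' <= eps -> exists b, f i s b = s') ->
  (* (v) common reward *)
  (forall i j, r i = r j) ->
  (* (pis, rhos) is a robust equilibrium *)
  robust_equilibrium f gamma r p pis rhos ->
  forall u v : 'I_N -> S -> R,
    normV (fun j s => Lop f gamma r p pis rhos v j s - Lop f gamma r p pis rhos u j s)
    <= gamma * normV (fun j s => v j s - u j s).
Proof.
move=> g0 g1 p0 p1 _ _ hr _ _ _ [hpis [hrhos _]] u v.
have nV0 : 0 <= normV (fun j s => v j s - u j s).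
  by rewrite /normV; elim/big_ind: _ => // [x y hx hy|j _]; [rewrite le_max hx|apply: bigmax0_ge0].
rewrite /normV; apply: bigmax_le; first exact: mulr_ge0.
move=> j _.
set Cj := \big[Num.max/0]_(s : S) `|v j s - u j s|.
have hCj : Cj <= normV (fun j s => v j s - u j s).
  exact: (le_bigmax _ (fun j => \big[Num.max/0]_(s : S) `|v j s - u j s|) j).
apply: (le_trans _ (ler_wpM2l g0 hCj)).
apply: bigmax_le; first by apply: mulr_ge0 => //; apply: bigmax0_ge0.
move=> s _.
rewrite /Lop /Lop_i.
set Cv := \big[Num.max/0]_(s' : S) (`|v j s'| + `|u j s'|).
have hvb : forall s', `|v j s'| <= Cv.
  move=> s'; apply: le_trans (le_bigmax _ (fun s' => `|v j s'| + `|u j s'|) s').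
  by rewrite lerDl.
have hub : forall s', `|u j s'| <= Cv.
  move=> s'; apply: le_trans (le_bigmax _ (fun s' => `|v j s'| + `|u j s'|) s').
  by rewrite lerDr.
have Qb : forall (w : S -> R), (forall s', `|w s'| <= Cv) ->
    forall pol rh, is_policy pol -> is_policy rh ->
    `|Qval f gamma r p pis rhos (i:=j) pol rh w s| <= `|Mi j| + gamma * Cv.
  move=> w hw pol rh hpol hrh; rewrite /Qval.
  apply: le_trans (ler_normD _ _) _.
  apply: lerD.
    rewrite /rd; apply: wsum_bound.
    - exact: policy_with_pol.
    - exact: policy_with_adv.
    - by move=> b a; apply: le_trans (hr j s a b) (ler_norm _).
  rewrite normrM (ger0_norm g0); apply: ler_wpM2l => //.
  apply: Pdv_bound => //.
  - exact: policy_with_pol.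
  - exact: policy_with_adv.
have Qd : forall pol rh, is_policy pol -> is_policy rh ->
    `|Qval f gamma r p pis rhos (i:=j) pol rh (v j) s -
      Qval f gamma r p pis rhos (i:=j) pol rh (u j) s| <= gamma * Cj.
  move=> pol rh hpol hrh; rewrite /Qval opprD addrACA subrr add0r -mulrBr.
  rewrite normrM (ger0_norm g0); apply: ler_wpM2l => //.
  rewrite Pdv_sub; apply: Pdv_bound => //.
  - exact: policy_with_pol.
  - exact: policy_with_adv.
  - by move=> s'; apply: (le_bigmax _ (fun s => `|v j s - u j s|) s').
rewrite ler_norml; apply/andP; split.
  rewrite lerNl opprB lerBlDr addrC.
  apply: (@sup_inf_le R _ _ _ _ _ _ (`|Mi j| + gamma * Cv)).
  - by exists (pis j).
  - by exists (rhos j).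
  - by move=> x y hx hy; apply: Qb.
  - by move=> x y hx hy; apply: Qb.
  - move=> x y hx hy; rewrite -lerBlDl.
    by have := Qd x y hx hy; rewrite distrC ler_norml => /andP[_ ->].
rewrite lerBlDr addrC.
apply: (@sup_inf_le R _ _ _ _ _ _ (`|Mi j| + gamma * Cv)).
- by exists (pis j).
- by exists (rhos j).
- by move=> x y hx hy; apply: Qb.
- by move=> x y hx hy; apply: Qb.
- move=> x y hx hy; rewrite -lerBlDl.
  by have := Qd x y hx hy; rewrite ler_norml => /andP[_ ->].
Qed.
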